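(* For all $\Sigma\subseteq\mathsf{FOR}$ and $\varphi\in\mathsf{FOR}$: $\Sigma\vdash_{\mathcal{F}S}\varphi$ if and only if $\Sigma\vDash_{\mathsf{R}^s}\varphi$, where $\mathsf{R}^s$ is the set of all symmetric Epstein relations. In particular every theorem of $\mathcal{F}S$ is valid on every symmetric relation.
   Context: Language: propositional letters $\Phi=\{p_0,p_1,\dots\}$; connectives $\neg$, $\lor,\wedge,\to,\leftrightarrow,\vartriangle,\looparrowright$; $\mathsf{FOR}$ the set of all formulas. An Epstein model is $\langle v,\mathfrak{R}\rangle$ with $v:\Phi\to\{0,1\}$ and $\mathfrak{R}\subseteq\mathsf{FOR}^2$ (an Epstein relation); truth: letters via $v$, boolean connectives classical, $\langle v,\mathfrak{R}\rangle\vDash\varphi\vartriangle\psi$ iff both true and $\langle\varphi,\psi\rangle\in\mathfrak{R}$; $\langle v,\mathfrak{R}\rangle\vDash\varphi\looparrowright\psi$ iff $\varphi\to\psi$ true and $\langle\varphi,\psi\rangle\in\mathfrak{R}$. For a set $\mathsf{R}$ of relations, $\Sigma\vDash_{\mathsf{R}}\varphi$ iff for every $\mathfrak{R}\in\mathsf{R}$ and every valuation $v$, if $\langle v,\mathfrak{R}\rangle$ satisfies all of $\Sigma$ then it satisfies $\varphi$. $\mathcal{F}$ is the least set containing all classical tautologies of the language (substitution instances of propositional tautologies) and the axioms $(p\looparrowright q)\to(p\to q)$ and $(p\vartriangle q)\leftrightarrow((p\looparrowright q)\wedge(p\wedge q))$, closed under uniform substitution and modus ponens. $\mathcal{F}S$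 is the least set containing $\mathcal{F}$ and the axiom $(s)\ (p\looparrowright q)\to((q\looparrowright p)\lor\neg(q\to p))$ ($p,q$ distinct letters), closed under uniform substitution and modus ponens. $\Sigma\vdash_{\mathcal{F}S}\varphi$ iff there is a finite sequence ending in $\varphi$ each member of which is in $\mathcal{F}S\cup\Sigma$ or follows from two earlier members by modus ponens. *)

(* Defs.v *)
From Stdlib Require Import List Arith.
Import ListNotations.

Inductive form : Type :=
| Var : nat -> form
| Neg : form -> form
| Or  : form -> form -> form
| And : form -> form -> form
| Imp : form -> form -> form
| Iff : form -> form -> form
| Tri : form -> form -> form
| Loop : form -> form -> form.

Definition relation := form -> form -> Prop.

Definition symmetric_rel (R : relation) : Prop :=
  forall phi psi, R phi psi -> R psi phi.

Fixpoint sat (v : nat -> bool) (R : relation) (f : form) : Prop :=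
  match f with
  | Var n => v n = true
  | Neg a => ~ sat v R a
  | Or a b => sat v R a \/ sat v R b
  | And a b => sat v R a /\ sat v R b
  | Imp a b => sat v R a -> sat v R b
  | Iff a b => (sat v R a <-> sat v R b)
  | Tri a b => sat v R a /\ sat v R b /\ R a b
  | Loop a b => (sat v R a -> sat v R b) /\ R a b
  end.

Definition consequence (Rset : relation -> Prop) (Sigma : form -> Prop) (phi : form) : Prop :=
  forall R, Rset R -> forall v : nat -> bool,
    (forall s, Sigma s -> sat v R s) -> sat v R phi.

Definition Rs : relation -> Prop := symmetric_rel.

Fixpoint subst (s : nat -> form) (f : form) : form :=
  match f with
  | Var n => s n
  | Neg a => Neg (subst s a)
  | Or a b => Or (subst s a) (subst s b)
  | And a b => And (subst s a) (subst s b)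
  | Imp a b => Imp (subst s a) (subst s b)
  | Iff a b => Iff (subst s a) (subst s b)
  | Tri a b => Tri (subst s a) (subst s b)
  | Loop a b => Loop (subst s a) (subst s b)
  end.

Fixpoint boolean (f : form) : Prop :=
  match f with
  | Var _ => True
  | Neg a => boolean a
  | Or a b | And a b | Imp a b | Iff a b => boolean a /\ boolean b
  | Tri _ _ | Loop _ _ => False
  end.

Fixpoint beval (v : nat -> bool) (f : form) : bool :=
  match f with
  | Var n => v n
  | Neg a => negb (beval v a)
  | Or a b => beval v a || beval v b
  | And a b => beval v a && beval v b
  | Imp a b => implb (beval v a) (beval v b)
  | Iff a b => Bool.eqb (beval v a) (beval v b)
  | Tri _ _ | Loop _ _ => false
  end.

Definition prop_tautology (f : form) : Prop :=
  boolean f /\ forall v, beval v f = true.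

Definition classical_tautology (f : form) : Prop :=
  exists t s, prop_tautology t /\ f = subst s t.

Definition p : form := Var 0.
Definition q : form := Var 1.

Definition axF1 : form := Imp (Loop p q) (Imp p q).
Definition axF2 : form := Iff (Tri p q) (And (Loop p q) (And p q)).
Definition axS : form := Imp (Loop p q) (Or (Loop q p) (Neg (Imp q p))).

Inductive inF : form -> Prop :=
| F_taut : forall f, classical_tautology f -> inF f
| F_ax1 : inF axF1
| F_ax2 : inF axF2
| F_subst : forall s f, inF f -> inF (subst s f)
| F_mp : forall a b, inF (Imp a b) -> inF a -> inF b.

Inductive inFS : form -> Prop :=
| FS_F : forall f, inF f -> inFS f
| FS_s : inFS axS
| FS_subst : forall s f, inFS f -> inFS (subst s f)
| FS_mp : forall a b, inFS (Imp a b) -> inFS a -> inFS b.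

Definition is_derivation (Sigma : form -> Prop) (l : list form) : Prop :=
  forall i, i < length l ->
    let x := nth i l (Var 0) in
    inFS x \/ Sigma x \/
    exists j k, j < i /\ k < i /\ nth k l (Var 0) = Imp (nth j l (Var 0)) x.

Definition derivable_FS (Sigma : form -> Prop) (phi : form) : Prop :=
  exists l, is_derivation Sigma (l ++ [phi]).

(* Main.v *)
From Stdlib Require Import List Arith Lia Classical ClassicalEpsilon Setoid.
Require Import Defs.
Import ListNotations.

Definition bof (P : Prop) : bool := if excluded_middle_informative P then true else false.
Lemma bof_spec P : bof P = true <-> P.
Proof. unfold bof; destruct (excluded_middle_informative P); split; intros; try tauto; discriminate. Qed.

Lemma sat_subst s v R f :
  sat v R (subst s f) <-> sat (fun n => bof (sat v R (s n))) (fun a b => R (subst s a) (subst s b)) f.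
Proof.
  induction f; simpl; try (rewrite IHf1, IHf2); try rewrite IHf; try tauto.
  rewrite bof_spec; tauto.
Qed.

Lemma sat_beval v R t : boolean t -> (sat v R t <-> beval v t = true).
Proof.
  induction t; simpl; intros Hb; try tauto.
  - rewrite IHt by tauto. destruct (beval v t); simpl; intuition discriminate.
  - rewrite IHt1, IHt2 by tauto. destruct (beval v t1), (beval v t2); simpl; intuition discriminate.
  - rewrite IHt1, IHt2 by tauto. destruct (beval v t1), (beval v t2); simpl; intuition discriminate.
  - rewrite IHt1, IHt2 by tauto. destruct (beval v t1), (beval v t2); simpl; intuition discriminate.
  - rewrite IHt1, IHt2 by tauto. destruct (beval v t1), (beval v t2); simpl; intuition discriminate.
Qed.

Lemma sound_F f : inF f -> forall R v, sat v R f.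
Proof.
  induction 1; intros R v.
  - destruct H as [t [s [[Hb Ht] ->]]]. apply sat_subst. apply sat_beval; auto.
  - simpl; tauto.
  - simpl; tauto.
  - apply sat_subst. apply IHinF.
  - simpl in IHinF1. apply IHinF1, IHinF2.
Qed.

Lemma sound_FS f : inFS f -> forall R, symmetric_rel R -> forall v, sat v R f.
Proof.
  induction 1; intros R HR v.
  - apply sound_F; auto.
  - simpl. intros [H1 H2]. destruct (classic (v 1 = true -> v 0 = true)); [left|right]; auto.
  - apply sat_subst. apply IHinFS. intros a b; apply HR.
  - apply (IHinFS1 R HR v), IHinFS2; auto.
Qed.

Inductive Der (S : form -> Prop) : form -> Prop :=
| d_ax : forall f, inFS f -> Der S f
| d_hyp : forall f, S f -> Der S f
| d_mp : forall a b, Der S (Imp a b) -> Der S a -> Der S b.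

Lemma Der_sound S f : Der S f -> consequence Rs S f.
Proof.
  induction 1; intros R HR v HS.
  - apply sound_FS; auto.
  - auto.
  - apply (IHDer1 R HR v HS), (IHDer2 R HR v HS).
Qed.

Lemma deriv_Der_aux S l : is_derivation S l -> forall i, i < length l -> Der S (nth i l (Var 0)).
Proof.
  intros H i. induction i as [i IH] using lt_wf_ind. intros Hi.
  destruct (H i Hi) as [A|[A|[j [k [Hj [Hk E]]]]]].
  - apply d_ax; auto.
  - apply d_hyp; auto.
  - apply d_mp with (nth j l (Var 0)); [rewrite <- E|]; apply IH; lia.
Qed.

Lemma deriv_Der S phi : derivable_FS S phi -> Der S phi.
Proof.
  intros [l H]. pose proof (deriv_Der_aux S _ H (length l)).
  rewrite app_nth2 in H0 by lia. rewrite Nat.sub_diag in H0. apply H0.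
  rewrite length_app; simpl; lia.
Qed.

Lemma is_der_app S l1 l2 : is_derivation S l1 -> is_derivation S l2 -> is_derivation S (l1 ++ l2).
Proof.
  intros H1 H2 i Hi. rewrite length_app in Hi.
  destruct (Nat.lt_ge_cases i (length l1)).
  - rewrite !app_nth1 by auto. destruct (H1 i H) as [A|[A|[j [k [Hj [Hk E]]]]]]; auto.
    right; right; exists j, k. rewrite !app_nth1 by lia. auto.
  - rewrite app_nth2 by auto. destruct (H2 (i - length l1)) as [A|[A|[j [k [Hj [Hk E]]]]]]; try lia; auto.
    right; right; exists (j + length l1), (k + length l1). rewrite !app_nth2 by lia.
    replace (j + length l1 - length l1) with j by lia.
    replace (k + length l1 - length l1) with k by lia. split; [lia|split;[lia|auto]].
Qed.

Lemma is_der_snoc S l f :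
  is_derivation S l ->
  (inFS f \/ S f \/ exists j k, j < length l /\ k < length l /\ nth k l (Var 0) = Imp (nth j l (Var 0)) f) ->
  is_derivation S (l ++ [f]).
Proof.
  intros H1 Hf i Hi. rewrite length_app in Hi; simpl in Hi.
  destruct (Nat.lt_ge_cases i (length l)).
  - rewrite !app_nth1 by auto. destruct (H1 i H) as [A|[A|[j [k [Hj [Hk E]]]]]]; auto.
    right; right; exists j, k. rewrite !app_nth1 by lia. auto.
  - assert (i = length l) by lia. subst i. rewrite app_nth2 by lia. rewrite Nat.sub_diag. simpl.
    destruct Hf as [A|[A|[j [k [Hj [Hk E]]]]]]; auto.
    right; right; exists j, k. rewrite !app_nth1 by lia. auto.
Qed.

Lemma Der_deriv S phi : Der S phi -> derivable_FS S phi.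
Proof.
  induction 1.
  - exists []. apply (is_der_snoc S [] f); [intros i Hi; simpl in Hi; lia| auto].
  - exists []. apply (is_der_snoc S [] f); [intros i Hi; simpl in Hi; lia| auto].
  - destruct IHDer1 as [l1 H1], IHDer2 as [l2 H2].
    exists ((l1 ++ [Imp a b]) ++ (l2 ++ [a])). apply is_der_snoc. apply is_der_app; auto.
    right; right. exists (length (l1 ++ [Imp a b]) + length l2), (length l1).
    rewrite !length_app; simpl. split; [lia|split;[lia|]].
    rewrite app_nth1 by (rewrite length_app; simpl; lia).
    rewrite app_nth2 by lia. rewrite Nat.sub_diag. simpl.
    rewrite app_nth2 by (rewrite length_app; simpl; lia).
    rewrite length_app. simpl.
    replace (length l1 + 1 + length l2 - (length l1 + 1)) with (length l2) by lia.
    rewrite app_nth2 by lia. rewrite Nat.sub_diag. reflexivity.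
Qed.

Definition s3 (A B C : form) : nat -> form := fun n => match n with 0 => A | 1 => B | _ => C end.
Definition P0 := Var 0. Definition P1 := Var 1. Definition P2 := Var 2.

Ltac taut t A B C := apply FS_F; apply F_taut; exists t, (s3 A B C); split;
  [split; [simpl; tauto | let v := fresh "v" in intro v; simpl; destruct (v 0), (v 1), (v 2); reflexivity] | reflexivity].

Lemma Der_mono (A B : form -> Prop) f : (forall x, A x -> B x) -> Der A f -> Der B f.
Proof. intros H; induction 1; [apply d_ax|apply d_hyp|eapply d_mp]; eauto. Qed.

Lemma deduction S a b : Der (fun x => S x \/ x = a) b -> Der S (Imp a b).
Proof.
  induction 1.
  - eapply d_mp; [apply d_ax|apply d_ax; eauto]. taut (Imp P0 (Imp P1 P0)) f a a.
  - destruct H as [H| ->].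
    + eapply d_mp; [apply d_ax|apply d_hyp; eauto]. taut (Imp P0 (Imp P1 P0)) f a a.
    + apply d_ax. taut (Imp P0 P0) a a a.
  - apply d_mp with (Imp a a0); [apply d_mp with (Imp a (Imp a0 b))|]; [apply d_ax| eauto | eauto].
    taut (Imp (Imp P0 (Imp P1 P2)) (Imp (Imp P0 P1) (Imp P0 P2))) a a0 b.
Qed.

Definition step (phi : form) (G : form -> Prop) (f : form) : form -> Prop :=
  fun x => G x \/ (x = f /\ ~ Der (fun y => G y \/ y = f) phi).

Fixpoint L (n : nat) : list form :=
  match n with
  | 0 => [Var 0]
  | S m => L m ++ Var (S m) :: flat_map (fun a => Neg a :: flat_map (fun b =>
             [Or a b; And a b; Imp a b; Iff a b; Tri a b; Loop a b]) (L m)) (L m)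
  end.

Lemma L_mono n m f : n <= m -> In f (L n) -> In f (L m).
Proof. induction 1; auto. intros H0; simpl; apply in_or_app; auto. Qed.

Lemma L_all f : exists n, In f (L n).
Proof.
  induction f.
  1: destruct n; [exists 0; simpl; auto| exists (S n); simpl; apply in_or_app; right; left; auto].
  1: destruct IHf as [n H]; exists (S n); simpl; apply in_or_app; right; right;
    apply in_flat_map; exists f; split; auto; left; auto.
  all: destruct IHf1 as [n1 H1]; destruct IHf2 as [n2 H2];
    exists (S (max n1 n2)); simpl; apply in_or_app; right; right;
    apply in_flat_map; exists f1; split; [apply (L_mono n1); [lia|auto]|];
    right; apply in_flat_map; exists f2; split; [apply (L_mono n2); [lia|auto]|]; simpl; tauto.
Qed.

Fixpoint chain (phi : form) (Sg : form -> Prop) (n : nat) : form -> Prop :=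
  match n with
  | 0 => Sg
  | S m => fold_left (step phi) (L m) (chain phi Sg m)
  end.

Lemma fold_sub phi l G x : G x -> fold_left (step phi) l G x.
Proof. revert G; induction l; simpl; auto. intros G H; apply IHl; left; auto. Qed.

Lemma step_cons phi G f : ~ Der G phi -> ~ Der (step phi G f) phi.
Proof.
  intros H. destruct (classic (Der (fun y => G y \/ y = f) phi)).
  - intros D; apply H. eapply Der_mono; [|apply D]. intros x [Hx|[_ Hx]]; tauto.
  - intros D; apply H0. eapply Der_mono; [|apply D]. intros x [Hx|[Hx _]]; auto.
Qed.

Lemma fold_cons phi l G : ~ Der G phi -> ~ Der (fold_left (step phi) l G) phi.
Proof. revert G; induction l; simpl; auto. intros G H; apply IHl, step_cons; auto. Qed.

Lemma fold_max phi l G f : In f l -> fold_left (step phi) l G f \/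
   Der (fun y => fold_left (step phi) l G y \/ y = f) phi.
Proof.
  revert G; induction l; simpl; [tauto|]. intros G [->|H]; [|apply IHl; auto].
  destruct (classic (Der (fun y => G y \/ y = f) phi)).
  - right. eapply Der_mono; [|apply H]. intros x [Hx|Hx]; [left; apply fold_sub; left; auto|auto].
  - left. apply fold_sub. right; auto.
Qed.

Lemma chain_mono phi Sg n m x : n <= m -> chain phi Sg n x -> chain phi Sg m x.
Proof. induction 1; auto. intros H0; simpl; apply fold_sub; auto. Qed.

Definition Gam phi Sg : form -> Prop := fun x => exists n, chain phi Sg n x.

Lemma Gam_fin phi Sg f : Der (Gam phi Sg) f -> exists n, Der (chain phi Sg n) f.
Proof.
  induction 1.
  - exists 0; apply d_ax; auto.
  - destruct H as [n H]; exists n; apply d_hyp; auto.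
  - destruct IHDer1 as [n1 H1], IHDer2 as [n2 H2]. exists (max n1 n2).
    eapply d_mp; (eapply Der_mono; [|eauto]); intros x; apply chain_mono; lia.
Qed.

Lemma Gam_cons phi Sg : ~ Der Sg phi -> ~ Der (Gam phi Sg) phi.
Proof.
  intros H D. destruct (Gam_fin _ _ _ D) as [n Dn]. revert Dn. induction n; simpl; auto.
  apply fold_cons; auto.
Qed.

Lemma Gam_max phi Sg f : Gam phi Sg f \/ Der (fun y => Gam phi Sg y \/ y = f) phi.
Proof.
  destruct (L_all f) as [n Hn]. destruct (fold_max phi _ (chain phi Sg n) f Hn) as [H|H].
  - left; exists (S n); auto.
  - right. eapply Der_mono; [|apply H]. intros x [Hx|Hx]; auto. left; exists (S n); auto.
Qed.

Definition Maxl (phi : form) (G : form -> Prop) : Prop :=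
  ~ Der G phi /\ forall f, G f \/ Der (fun y => G y \/ y = f) phi.

Lemma closed phi G x : Maxl phi G -> Der G x -> G x.
Proof.
  intros [H1 H2] D. destruct (H2 x) as [|D2]; auto. exfalso; apply H1.
  eapply d_mp; [apply deduction, D2|auto].
Qed.

Lemma memax phi G x : Maxl phi G -> inFS x -> G x.
Proof. intros M H; apply (closed phi); auto; apply d_ax; auto. Qed.

Lemma mp2 phi G a b : Maxl phi G -> G (Imp a b) -> G a -> G b.
Proof. intros M H1 H2; apply (closed phi); auto; eapply d_mp; apply d_hyp; eauto. Qed.

Lemma mem_neg phi G a : Maxl phi G -> (G (Neg a) <-> ~ G a).
Proof.
  intros M. split.
  - intros H1 H2. apply (proj1 M). eapply d_mp; [eapply d_mp|]; [apply d_ax| apply d_hyp, H1| apply d_hyp, H2].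
    taut (Imp (Neg P0) (Imp P0 P1)) a phi a.
  - intros H. apply NNPP; intros H'. apply (proj1 M).
    destruct (proj2 M a) as [|D1]; [tauto|]. destruct (proj2 M (Neg a)) as [|D2]; [tauto|].
    eapply d_mp; [eapply d_mp|]; [apply d_ax| apply deduction, D1| apply deduction, D2].
    taut (Imp (Imp P0 P1) (Imp (Imp (Neg P0) P1) P1)) a phi a.
Qed.

Lemma dich phi G a : Maxl phi G -> G a \/ G (Neg a).
Proof. intros M; rewrite (mem_neg phi G a M); tauto. Qed.

Lemma mem_imp phi G a b : Maxl phi G -> (G (Imp a b) <-> (G a -> G b)).
Proof.
  intros M; split.
  - intros; eapply (mp2 phi G); eauto.
  - intros H. destruct (dich phi G a M) as [Ha|Ha].
    + apply (mp2 phi G b (Imp a b)); auto. apply (memax phi); auto. taut (Imp P1 (Imp P0 P1)) a b a.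
    + apply (mp2 phi G (Neg a) (Imp a b)); auto. apply (memax phi); auto. taut (Imp (Neg P0) (Imp P0 P1)) a b a.
Qed.

Lemma mem_or phi G a b : Maxl phi G -> (G (Or a b) <-> (G a \/ G b)).
Proof.
  intros M; split.
  - intros H. destruct (dich phi G a M) as [Ha|Ha]; auto. right.
    eapply (mp2 phi G); [auto| |apply Ha]. eapply (mp2 phi G); [auto| |apply H]. apply (memax phi); auto.
    taut (Imp (Or P0 P1) (Imp (Neg P0) P1)) a b a.
  - intros [H|H]; (eapply (mp2 phi G); [eauto| |apply H]); apply (memax phi); auto.
    taut (Imp P0 (Or P0 P1)) a b a. taut (Imp P1 (Or P0 P1)) a b a.
Qed.

Lemma mem_and phi G a b : Maxl phi G -> (G (And a b) <-> (G a /\ G b)).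
Proof.
  intros M; split.
  - intros H; split; (eapply (mp2 phi G); [eauto| |apply H]); apply (memax phi); auto.
    taut (Imp (And P0 P1) P0) a b a. taut (Imp (And P0 P1) P1) a b a.
  - intros [H1 H2]. eapply (mp2 phi G); [eauto| |apply H2]. eapply (mp2 phi G); [eauto| |apply H1].
    apply (memax phi); auto. taut (Imp P0 (Imp P1 (And P0 P1))) a b a.
Qed.

Lemma mem_iff phi G a b : Maxl phi G -> (G (Iff a b) <-> (G a <-> G b)).
Proof.
  intros M. assert (E : (G a <-> G b) <-> (G (Imp a b) /\ G (Imp b a))) by
    (rewrite (mem_imp phi G a b M), (mem_imp phi G b a M); tauto). rewrite E. split.
  - intros H; split; (eapply (mp2 phi G); [eauto| |apply H]); apply (memax phi); auto.
    taut (Imp (Iff P0 P1) (Imp P0 P1)) a b a. taut (Imp (Iff P0 P1) (Imp P1 P0)) a b a.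
  - intros [H1 H2]. eapply (mp2 phi G); [eauto| |apply H2]. eapply (mp2 phi G); [eauto| |apply H1].
    apply (memax phi); auto. taut (Imp (Imp P0 P1) (Imp (Imp P1 P0) (Iff P0 P1))) a b a.
Qed.

Definition RG (G : form -> Prop) : Defs.relation := fun a b => G (Loop a b) \/ G (Loop b a).

Lemma ax1_inst a b : inFS (Imp (Loop a b) (Imp a b)).
Proof. apply FS_F. exact (F_subst (s3 a b a) _ F_ax1). Qed.
Lemma ax2_inst a b : inFS (Iff (Tri a b) (And (Loop a b) (And a b))).
Proof. apply FS_F. exact (F_subst (s3 a b a) _ F_ax2). Qed.
Lemma axs_inst a b : inFS (Imp (Loop a b) (Or (Loop b a) (Neg (Imp b a)))).
Proof. exact (FS_subst (s3 a b a) _ FS_s). Qed.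

Lemma mem_loop phi G a b : Maxl phi G -> (G (Loop a b) <-> ((G a -> G b) /\ RG G a b)).
Proof.
  intros M; split.
  - intros H; split; [|left; auto]. apply (mem_imp phi); auto.
    eapply (mp2 phi G); eauto. apply (memax phi); auto; apply ax1_inst.
  - intros [H [H1|H1]]; auto.
    pose proof (mp2 phi G _ _ M (memax phi G _ M (axs_inst b a)) H1) as H2.
    apply (mem_or phi G _ _ M) in H2. destruct H2 as [|H2]; auto.
    apply (mem_neg phi G _ M) in H2. exfalso; apply H2; apply (mem_imp phi); auto.
Qed.

Lemma mem_tri phi G a b : Maxl phi G -> (G (Tri a b) <-> (G a /\ G b /\ RG G a b)).
Proof.
  intros M. pose proof (memax phi G _ M (ax2_inst a b)) as H.
  apply (mem_iff phi) in H; auto. rewrite H, (mem_and phi G _ _ M), (mem_and phi G _ _ M),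
    (mem_loop phi G _ _ M). tauto.
Qed.

Lemma truth phi G f : Maxl phi G ->
  (sat (fun n => bof (G (Var n))) (RG G) f <-> G f).
Proof.
  intros M. induction f; simpl.
  - apply bof_spec.
  - rewrite IHf, (mem_neg phi G _ M); tauto.
  - rewrite IHf1, IHf2, (mem_or phi G _ _ M); tauto.
  - rewrite IHf1, IHf2, (mem_and phi G _ _ M); tauto.
  - rewrite IHf1, IHf2, (mem_imp phi G _ _ M); tauto.
  - rewrite IHf1, IHf2, (mem_iff phi G _ _ M); tauto.
  - rewrite IHf1, IHf2, (mem_tri phi G _ _ M); tauto.
  - rewrite IHf1, IHf2, (mem_loop phi G _ _ M); tauto.
Qed.

Lemma complete Sg phi : consequence Rs Sg phi -> Der Sg phi.
Proof.
  intros C. apply NNPP; intros N.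
  assert (M : Maxl phi (Gam phi Sg)) by (split; [apply Gam_cons; auto| apply Gam_max]).
  apply (proj1 M). apply d_hyp. apply (truth phi _ phi M).
  apply C. { intros x y [H|H]; [right|left]; auto. }
  intros s Hs. apply (truth phi _ s M). exists 0; auto.
Qed.

Theorem mainTheorem16 :
  (forall (Sigma : form -> Prop) (phi : form),
      derivable_FS Sigma phi <-> consequence Rs Sigma phi) /\
  (forall phi : form, inFS phi ->
      forall R : relation, symmetric_rel R -> forall v : nat -> bool, sat v R phi).
Proof.
  split.
  - intros Sg phi; split; intros H.
    + apply Der_sound, deriv_Der; auto.
    + apply Der_deriv, complete; auto.
  - exact sound_FS.
Qed.
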